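(* Let $d\ge1$ and $1<p_1<p<p_2<\infty$. Then there exist Young functions $\Phi$ and $\Psi$ with $q_\Phi<p_1$, $p_\Psi>p_2$, and $L^\Phi(\mathbb R^d)=L^\Psi(\mathbb R^d)=L^p(\mathbb R^d)$.
   Context: A Young function is a convex function $\Phi:[0,\infty)\to[0,\infty)$ with $\Phi(0)=0$, $\Phi(t)>0$ for $t>0$, and $\lim_{t\to\infty}\Phi(t)=\infty$. $\Phi'$ denotes the right derivative of $\Phi$. The Lebesgue exponents of $\Phi$ are $p_\Phi=\sup_{t>0}\frac{t\Phi'(t)}{\Phi(t)}$ and $q_\Phi=\inf_{t>0}\frac{t\Phi'(t)}{\Phi(t)}$. For a measurable $f$ on $\mathbb R^d$, $\rho_\Phi(f)=\int_{\mathbb R^d}\Phi(|f(x)|)\,dx$, the Luxemburg norm is $\|f\|_{L^\Phi}=\inf\{\lambda>0:\rho_\Phi(f/\lambda)\le1\}$, and the Orlicz space $L^\Phi(\mathbb R^d)$ consists of (classes of) measurable $f$ with $\|f\|_{L^\Phi}<\infty$. *)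

(* Defs.v *)
From HB Require Import structures.
From mathcomp Require Import all_boot all_order all_algebra.
From mathcomp Require Import all_classical all_reals all_analysis.
Set Implicit Arguments. Unset Strict Implicit. Unset Printing Implicit Defensive.
Import Order.TTheory GRing.Theory Num.Theory.
Import numFieldNormedType.Exports.
Local Open Scope classical_set_scope.
Local Open Scope ring_scope.

(* Young function Phi : [0,oo) -> [0,oo), given as a function R -> R
   whose values are only relevant on [0,oo). *)
Definition young_function (R : realType) (Phi : R -> R) : Prop :=
  [/\ (forall s t l : R, 0 <= s -> 0 <= t -> 0 <= l <= 1 ->
         Phi (l * s + (1 - l) * t) <= l * Phi s + (1 - l) * Phi t),
      Phi 0 = 0,
      (forall t : R, 0 < t -> 0 < Phi t) &
      Phi x @[x --> +oo] --> +oo].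

Definition rderiv (R : realType) (Phi : R -> R) (t : R) : R :=
  lim ((fun h : R => (Phi (t + h) - Phi t) / h) @ 0^'+).

Definition p_exp (R : realType) (Phi : R -> R) : \bar R :=
  ereal_sup [set ((t * rderiv Phi t / Phi t)%:E)%E | t in [set t : R | 0 < t]].
Definition q_exp (R : realType) (Phi : R -> R) : \bar R :=
  ereal_inf [set ((t * rderiv Phi t / Phi t)%:E)%E | t in [set t : R | 0 < t]].

Section spaces.
Context {dT : measure_display} {T : measurableType dT} {R : realType}.
Variable mu : {measure set T -> \bar R}.

Definition modular (Phi : R -> R) (f : T -> R) : \bar R :=
  (\int[mu]_x (Phi `|f x|)%:E)%E.

(* Luxemburg norm: inf {lambda > 0 | rho_Phi(f/lambda) <= 1} (inf of empty = +oo) *)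
Definition luxemburg_norm (Phi : R -> R) (f : T -> R) : \bar R :=
  ereal_inf [set (l%:E)%E | l in
    [set l : R | 0 < l /\ (modular Phi (fun x => (f x / l)%R) <= 1)%E]].

Definition orlicz_space (Phi : R -> R) : set (T -> R) :=
  [set f | measurable_fun setT f /\ (luxemburg_norm Phi f < +oo)%E].

Definition lebesgue_space (p : R) : set (T -> R) :=
  [set f | measurable_fun setT f /\ ('N[mu]_(p%:E)[EFin \o f] < +oo)%E].
End spaces.

(* mu is Lebesgue measure on R^d = d.-tuple R (with its Borel product
   sigma-algebra): it gives closed boxes their volume. *)
Definition is_lebesgue_Rd (R : realType) (d : nat)
    (mu : {measure set (d.-tuple R) -> \bar R}) : Prop :=
  forall a b : d.-tuple R, (forall i, tnth a i <= tnth b i) ->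
    mu [set x | forall i, tnth a i <= tnth x i <= tnth b i] =
    ((\prod_(i < d) (tnth b i - tnth a i))%:E)%E.

(* Main.v *)
Require Import Defs.
From HB Require Import structures.
From mathcomp Require Import all_boot all_order all_algebra.
From mathcomp Require Import all_classical all_reals all_analysis.
From mathcomp Require Import ring lra measurable_realfun.
Import Order.TTheory GRing.Theory Num.Theory.
Local Open Scope classical_set_scope.
Local Open Scope ring_scope.

Section Phi.
Context {R : realType} (p c : R).
Hypothesis p1 : 1 <= p.
Hypothesis c1 : 1 <= c.

Definition Phi0 (t : R) : R := t `^ p + c * Num.max (t - 1) 0.

Let p0 : 0 < p. Proof. exact: (lt_le_trans ltr01 p1). Qed.
Let c0 : 0 <= c. Proof. exact: (le_trans ler01 c1). Qed.

Lemma max_conv (s t l : R) : 0 <= l <= 1 ->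
  Num.max (l * s + (1 - l) * t - 1) 0 <=
  l * Num.max (s - 1) 0 + (1 - l) * Num.max (t - 1) 0.
Proof.
move=> /andP[l0 l1].
have l1' : 0 <= 1 - l by rewrite subr_ge0.
rewrite ge_max; apply/andP; split; last first.
  by rewrite addr_ge0 // mulr_ge0 // le_max lexx orbT.
have -> : l * s + (1 - l) * t - 1 = l * (s - 1) + (1 - l) * (t - 1).
  by rewrite !mulrBr !mulr1; ring.
by rewrite lerD // ler_wpM2l // le_max lexx.
Qed.

Lemma Phi0_convex (s t l : R) : 0 <= s -> 0 <= t -> 0 <= l <= 1 ->
  Phi0 (l * s + (1 - l) * t) <= l * Phi0 s + (1 - l) * Phi0 t.
Proof.
move=> s0 t0 /andP[l0 l1].
rewrite /Phi0.
have H1 : (l * s + (1 - l) * t) `^ p <= l * s `^ p + (1 - l) * t `^ p.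
  have := @convex_powR R p p1 (Itv01 l0 l1) s t.
  rewrite !inE /= !in_itv /= !andbT => /(_ s0 t0).
  by rewrite !convRE /=.
have H2 := @max_conv s t l (introT andP (conj l0 l1)).
have l1' : 0 <= 1 - l by rewrite subr_ge0.
rewrite !mulrDr.
have -> : l * s `^ p + l * (c * Num.max (s - 1) 0) +
   ((1 - l) * t `^ p + (1 - l) * (c * Num.max (t - 1) 0)) =
   (l * s `^ p + (1 - l) * t `^ p) + c * (l * Num.max (s - 1) 0 + (1 - l) * Num.max (t - 1) 0).
  ring.
by rewrite lerD // ler_wpM2l.
Qed.

Lemma Phi00 : Phi0 0 = 0.
Proof.
rewrite /Phi0 powR0 ?gt_eqF //.
by rewrite add0r (_ : Num.max (0 - 1) 0 = 0) ?mulr0 ?addr0 // max_r // sub0r lerN10.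
Qed.

Lemma Phi0_ge (t : R) : 0 <= t -> t `^ p <= Phi0 t.
Proof. by move=> t0; rewrite /Phi0 lerDl mulr_ge0 // le_max lexx orbT. Qed.

Lemma Phi0_gt0 (t : R) : 0 < t -> 0 < Phi0 t.
Proof. by move=> t0; apply: (lt_le_trans _ (Phi0_ge t (ltW t0))); rewrite powR_gt0. Qed.

Lemma Phi0_le (t : R) : 0 <= t -> Phi0 t <= (1 + c) * t `^ p.
Proof.
move=> t0; rewrite /Phi0 mulrDl mul1r lerD2l ler_wpM2l //.
rewrite ge_max powR_ge0 andbT.
have [t1|t1] := leP 1 t.
  by apply: le_trans (le1r_powR t1 p1); rewrite gerBl.
by apply: le_trans (powR_ge0 _ _); rewrite subr_le0 ltW.
Qed.

Lemma Phi0_cvgy : Phi0 x @[x --> +oo] --> +oo.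
Proof.
apply: (@ger_cvgy _ _ _ _ (fun r => r + -1)); last exact: cvg_addrr.
near=> x.
have x1 : 1 <= x by near: x; apply: nbhs_pinfty_ge; rewrite num_real.
rewrite /Phi0 max_l ?subr_ge0 //.
apply: le_trans (_ : c * (x - 1) <= _); last by rewrite lerDr powR_ge0.
by rewrite mulrC ler_peMr // subr_ge0.
Unshelve. all: end_near. Qed.

Lemma young_Phi0 : young_function Phi0.
Proof.
split.
- exact: Phi0_convex.
- exact: Phi00.
- exact: Phi0_gt0.
- exact: Phi0_cvgy.
Qed.


Lemma rderiv_Phi0 (t : R) : 1 <= t -> rderiv Phi0 t = p * t `^ (p - 1) + c.
Proof.
move=> t1.
have t0 : 0 < t by apply: lt_le_trans t1.
have D : derivable (@powR R ^~ p) t 1 by apply: derivable_powR; rewrite in_itv /= andbT.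
have E : 'D_1 (@powR R ^~ p) t = p * t `^ (p - 1).
  by rewrite -derive1E powR_derive1 // in_itv /= andbT.
have H : (fun h : R => h^-1 *: ((@powR R ^~ p \o shift t) (h *: (1:R)) - t `^ p)) h @[h --> 0^'] --> 'D_1 (@powR R ^~ p) t := D.
have H' := cvg_dnbhs_at_right H.
rewrite /rderiv; apply: (cvg_lim (@norm_hausdorff _ R^o)).
rewrite -E.
apply: (@cvg_trans _ ((fun h : R => h^-1 *: ((@powR R ^~ p \o shift t) (h *: (1:R)) - t `^ p) + c) h @[h --> 0^'+])).
  apply: near_eq_cvg; near=> h.
  have h0 : 0 < h by near: h; exact: nbhs_right_gt.
  rewrite /Phi0 /= /shift /=.
  have -> : h *: (1:R) = h by rewrite /GRing.scale /= mulr1.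
  have -> : forall x : R, h^-1 *: x = h^-1 * x by [].
  rewrite max_l ?subr_ge0 ?(le_trans t1) ?lerDl ?ltW //.
  rewrite max_l ?subr_ge0 //.
  rewrite addrC (addrC t h).
  by field; rewrite gt_eqF.
exact: cvgD H' (cvg_cst _).
Unshelve. all: end_near. Qed.

End Phi.

Lemma measurable_Phi0 {R : realType} (p c : R) : measurable_fun setT (Phi0 p c).
Proof.
apply: measurable_funD; first exact: measurable_powR.
apply: measurable_funM; first exact: measurable_cst.
apply: (@measurable_maxr _ _ _ _ (fun t : R => t - 1) (cst 0)).
  by apply: measurable_funB => //; exact: measurable_cst.
exact: measurable_cst.
Qed.

Lemma orlicz_Phi0 {dT : measure_display} {T : measurableType dT} {R : realType}
  (mu : {measure set T -> \bar R}) (p c : R) : 1 <= p -> 1 <= c ->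
  orlicz_space mu (Phi0 p c) = lebesgue_space mu p.
Proof.
move=> p1 c1.
have p0 : 0 < p by apply: lt_le_trans p1.
have c0 : 0 <= c by apply: le_trans c1.
apply/seteqP; split => f [mf Hf]; split => //.
- have LN : ('N[mu]_(p%:E)[EFin \o f] =
      (\int[mu]_x (`|f x| `^ p)%:E) `^ p^-1)%E.
    by rewrite unlock.
  rewrite LN; apply: poweR_lty.
  move/ereal_inf_ltP: Hf => [_ [l [l0 Hl]] <-] _.
  have mg : measurable_fun setT (fun x => (`|f x| `^ p)%:E).
    have mg0 : measurable_fun setT (fun x => `|f x| `^ p).
      apply: (measurableT_comp (measurable_powR p)).
      exact: (measurableT_comp (@normr_measurable R setT)).
    exact/(measurable_EFinP setT (fun x => `|f x| `^ p)).
  have li0 : 0 < l^-1 `^ p by rewrite powR_gt0 // invr_gt0.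
  have H : (\int[mu]_x (`|f x| `^ p)%:E * (l^-1 `^ p)%:E <= 1)%E.
    rewrite -ge0_integralZr //; last by rewrite lee_fin ltW.
    apply: le_trans Hl; rewrite /modular.
    have mPF : measurable_fun setT (fun x => (Phi0 p c `|f x / l|)%:E).
      apply/(measurable_EFinP setT (fun x => Phi0 p c `|f x / l|)).
      apply: (measurableT_comp (measurable_Phi0 p c)).
      apply: (measurableT_comp (@normr_measurable R setT)).
      by apply: measurable_funM => //; exact: measurable_cst.
    have mgk : measurable_fun setT (fun x => (`|f x| `^ p)%:E * (l^-1 `^ p)%:E)%E.
      by apply: emeasurable_funM => //; exact: measurable_cst.
    apply: ge0_le_integral => //.
    + by move=> x _; rewrite -EFinM lee_fin mulr_ge0 // ?powR_ge0 // ltW.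
    + move=> x _; rewrite -EFinM lee_fin.
      apply: (@le_trans _ _ (`|f x / l| `^ p)); last exact: Phi0_ge.
      by rewrite -powRM ?normr_ge0 ?invr_ge0 ?(ltW l0) // normrM normfV (ger0_norm (ltW l0)).
  move: H; case E: (\int[mu]_x _)%E => [r| |] //; first by move=> _; exact: ltry.
  by rewrite mulyr gtr0_sg // mul1e leye_eq.
- have LN : ('N[mu]_(p%:E)[EFin \o f] =
      (\int[mu]_x (`|f x| `^ p)%:E) `^ p^-1)%E.
    by rewrite unlock.
  rewrite LN in Hf; move/lty_poweRy: Hf => /(_ (invr_neq0 (lt0r_neq0 p0))) Hf.
  have I0 : (0 <= \int[mu]_x (`|f x| `^ p)%:E)%E.
    by apply: integral_ge0 => x _; rewrite lee_fin powR_ge0.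
  set r := fine (\int[mu]_x (`|f x| `^ p)%:E).
  have Ir : (\int[mu]_x (`|f x| `^ p)%:E = r%:E)%E.
    by rewrite fineK // ge0_fin_numE.
  have r0 : 0 <= r by rewrite -lee_fin -Ir.
  set l := (1 + c) * r + 1.
  have l1 : 1 <= l by rewrite lerDr mulr_ge0 // addr_ge0.
  have l0 : 0 < l by apply: lt_le_trans l1.
  have mg : measurable_fun setT (fun x => (`|f x| `^ p)%:E).
    have mg0 : measurable_fun setT (fun x => `|f x| `^ p).
      apply: (measurableT_comp (measurable_powR p)).
      exact: (measurableT_comp (@normr_measurable R setT)).
    exact/(measurable_EFinP setT (fun x => `|f x| `^ p)).
  apply/ereal_inf_ltP; exists l%:E; last exact: ltry.
  exists l => //; split => //.
  rewrite /modular.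
  apply: (@le_trans _ _ (\int[mu]_x (((1 + c) * l^-1 `^ p)%:E * (`|f x| `^ p)%:E))%E).
    have mPF : measurable_fun setT (fun x => (Phi0 p c `|f x / l|)%:E).
      apply/(measurable_EFinP setT (fun x => Phi0 p c `|f x / l|)).
      apply: (measurableT_comp (measurable_Phi0 p c)).
      apply: (measurableT_comp (@normr_measurable R setT)).
      by apply: measurable_funM => //; exact: measurable_cst.
    have mgk : measurable_fun setT (fun x => (((1 + c) * l^-1 `^ p)%:E * (`|f x| `^ p)%:E))%E.
      by apply: emeasurable_funM => //; exact: measurable_cst.
    apply: ge0_le_integral => //.
    + by move=> x _; rewrite lee_fin (le_trans _ (Phi0_ge p c c1 _ (normr_ge0 _))) // powR_ge0.
    + move=> x _; rewrite -EFinM lee_fin.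
      apply: (le_trans (Phi0_le p c p1 c1 _ (normr_ge0 _))).
      rewrite -mulrA ler_wpM2l ?addr_ge0 // mulrC.
      by rewrite -powRM ?normr_ge0 ?invr_ge0 ?(ltW l0) // normrM normfV (ger0_norm (ltW l0)) mulrC.
  rewrite ge0_integralZl //; last by rewrite lee_fin mulr_ge0 ?addr_ge0 ?powR_ge0.
  rewrite Ir -EFinM lee_fin.
  have li : l^-1 `^ p <= l^-1.
    by apply: ge1r_powR => //; rewrite invr_gt0 l0 /= invf_le1.
  apply: (@le_trans _ _ ((1 + c) * l^-1 * r)).
    by rewrite ler_wpM2r // ler_wpM2l // addr_ge0.
  rewrite mulrAC ler_pdivrMr // mul1r /l lerDl //.
Qed.

Theorem mainTheorem6 (R : realType) (d : nat)
    (mu : {measure set (d.-tuple R) -> \bar R})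
    (p1 p p2 : R) :
  (1 <= d)%N -> is_lebesgue_Rd mu ->
  1 < p1 -> p1 < p -> p < p2 ->
  exists Phi Psi : R -> R,
    [/\ young_function Phi, (q_exp Phi < p1%:E)%E &
         orlicz_space mu Phi = lebesgue_space mu p] /\
    [/\ young_function Psi, (p2%:E < p_exp Psi)%E &
         orlicz_space mu Psi = lebesgue_space mu p].
Proof.
move=> _ _ hp1 hp1p hpp2.
have pge1 : 1 <= p by apply: ltW; apply: lt_trans hp1p.
have p0 : 0 < p by apply: lt_le_trans pge1.
set T := 2 * p1 / (p1 - 1).
have p1m : 0 < p1 - 1 by rewrite subr_gt0.
have hT : T * (p1 - 1) = 2 * p1 by rewrite /T divfK // gt_eqF.
have T1 : 1 <= T.
  rewrite /T ler_pdivlMr // mul1r; lra.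
have T0 : 0 < T by apply: lt_le_trans T1.
set X := T `^ p.
have X0 : 0 < X by rewrite powR_gt0.
set c := p * X + p2 + 1.
have p20 : 0 < p2 by lra.
have c1 : 1 <= c by rewrite /c -lerBlDr subrr addr_ge0 // ?mulr_ge0 ?ltW.
have hy := young_Phi0 p c pge1 c1.
have ho := orlicz_Phi0 mu p c pge1 c1.
exists (Phi0 p c), (Phi0 p c); split; split => //.
- apply/ereal_inf_ltP; exists ((T * rderiv (Phi0 p c) T / Phi0 p c T)%:E).
    by exists T.
  rewrite lte_fin rderiv_Phi0 // mulrDr mulrCA mulr_powRB1 ?ltW //.
  rewrite /Phi0 -/X max_l ?subr_ge0 //.
  have cT : 0 <= c * (T - 1) by rewrite mulr_ge0 ?subr_ge0 //; lra.
  have den : 0 < X + c * (T - 1) by lra.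
  rewrite ltr_pdivrMr //.
  have hc : p * X < c by rewrite /c; lra.
  have e1 : p1 * (X + c * (T - 1)) = p1 * X + c * (T * (p1 - 1)) + c * T - c * p1.
    ring.
  rewrite e1 hT.
  have : (p - p1) * X < p * X by nra.
  nra.
- apply/ereal_sup_gtP; exists ((1 * rderiv (Phi0 p c) 1 / Phi0 p c 1)%:E).
    by exists (1:R) => //; rewrite /= ltr01.
  rewrite lte_fin rderiv_Phi0 // /Phi0 powR1 subrr max_r // mulr0 addr0 divr1 mul1r mulr1.
  rewrite /c; nra.
Qed.
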